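(* Let $\mathrm{M}$ be a 2-space group of type $\ast2222$ (IT number 6, $pmm$) such that the flat orbifold $E^2/\mathrm{M}$ (a rectangle) is a square. Let m-ref. be the reflection of the square in a line joining midpoints of opposite sides and d-ref. the reflection in a diagonal. Then $\mathrm{Sym}(\mathrm{M})$ is the dihedral group $\langle \text{m-ref.}, \text{d-ref.}\rangle$ of order 8, $\mathrm{Sym}(\mathrm{M})=\mathrm{Aff}(\mathrm{M})$, and $\Omega:\mathrm{Aff}(\mathrm{M})\to\mathrm{Out}(\mathrm{M})$ is an isomorphism.
   Context: A 2-space group is a discrete group of isometries of $E^2$ with compact quotient. Affine maps of $E^2$ are written $a+A$ ($x\mapsto a+Ax$). For a 2-space group $\mathrm{M}$, let $N_A(\mathrm{M})$ be its normalizer in the affine group of $E^2$; each $a+A\in N_A(\mathrm{M})$ induces an affinity $(a+A)_\star:\mathrm{M}x\mapsto\mathrm{M}(a+Ax)$ of the flat orbifold $E^2/\mathrm{M}$. $\mathrm{Aff}(\mathrm{M})$ is the group of all such affinities and $\mathrm{Sym}(\mathrm{M})=\mathrm{Isom}(E^2/\mathrm{M})$ its subgroup of isometries. $\Omega:\mathrm{Aff}(\mathrm{M})\to\mathrm{Out}(\mathrm{M})$ sends $(a+A)_\star$ to the outer automorphism class of $g\mapsto(a+A)g(a+A)^{-1}$ on $\mathrm{M}$. *)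

(* Defs.v *)
From Stdlib Require Import Reals ZArith.
Open Scope R_scope.

Definition R2 : Type := (R * R)%type.
Definition map2 : Type := R2 -> R2.

Definition dist2 (p q : R2) : R :=
  sqrt ((fst p - fst q) ^ 2 + (snd p - snd q) ^ 2).

Definition is_isometry (f : map2) : Prop :=
  (forall p q, dist2 (f p) (f q) = dist2 p q) /\ (forall y, exists x, f x = y).

Definition is_affine (f : map2) : Prop :=
  exists a1 a2 m11 m12 m21 m22 : R,
    m11 * m22 - m12 * m21 <> 0 /\
    forall x, f x = (a1 + m11 * fst x + m12 * snd x,
                     a2 + m21 * fst x + m22 * snd x).

Definition group2 : Type := map2 -> Prop.

(* The standard 2-space group of type *2222 (pmm) whose orbifold is the
   square [0,s]^2: generated by the reflections in the lines x1=0, x1=s,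
   x2=0, x2=s; its elements are x |-> (e1 x1 + 2 s k1, e2 x2 + 2 s k2). *)
Definition pmm_square (s : R) : group2 := fun g =>
  exists (e1 e2 : R) (k1 k2 : Z),
    (e1 = 1 \/ e1 = -1) /\ (e2 = 1 \/ e2 = -1) /\
    forall x, g x = (e1 * fst x + 2 * s * IZR k1, e2 * snd x + 2 * s * IZR k2).

Definition conj_group (iota : map2) (M0 M : group2) : Prop :=
  forall g, M g <-> exists h, M0 h /\ forall x, g (iota x) = iota (h x).

Definition orbit (M : group2) (x : R2) : R2 -> Prop :=
  fun y => exists g, M g /\ y = g x.

Definition Orb (M : group2) : Type :=
  { O : R2 -> Prop | exists x, O = orbit M x }.

Definition orb (M : group2) (x : R2) : Orb M :=
  exist _ (orbit M x) (ex_intro _ x eq_refl).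

Definition odist (M : group2) (O1 O2 : Orb M) (r : R) : Prop :=
  (forall p q, proj1_sig O1 p -> proj1_sig O2 q -> r <= dist2 p q) /\
  (forall e, 0 < e -> exists p q, proj1_sig O1 p /\ proj1_sig O2 q /\
                                  dist2 p q < r + e).

Definition normalizes (M : group2) (phi : map2) : Prop :=
  (forall g, M g -> exists h, M h /\ forall x, phi (g x) = h (phi x)) /\
  (forall h, M h -> exists g, M g /\ forall x, phi (g x) = h (phi x)).

Definition in_NA (M : group2) (phi : map2) : Prop :=
  is_affine phi /\ normalizes M phi.

Definition induces (M : group2) (phi : map2) (F : Orb M -> Orb M) : Prop :=
  forall x, F (orb M x) = orb M (phi x).

Definition Aff (M : group2) (F : Orb M -> Orb M) : Prop :=
  exists phi, in_NA M phi /\ induces M phi F.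

Definition Sym (M : group2) (F : Orb M -> Orb M) : Prop :=
  Aff M F /\ forall O1 O2 r, odist M O1 O2 r <-> odist M (F O1) (F O2) r.

Definition compm (f g : map2) : map2 := fun x => f (g x).

Definition is_aut (M : group2) (alpha : map2 -> map2) : Prop :=
  (forall g, M g -> M (alpha g)) /\
  (forall g h, M g -> M h -> alpha g = alpha h -> g = h) /\
  (forall h, M h -> exists g, M g /\ alpha g = h) /\
  (forall g h, M g -> M h -> alpha (compm g h) = compm (alpha g) (alpha h)).

(* equality in Out(M) = Aut(M)/Inn(M): alpha = c_k o beta on M, k in M,
   where c_k(g) = k g k^{-1} *)
Definition out_eq (M : group2) (alpha beta : map2 -> map2) : Prop :=
  exists k, M k /\ forall g, M g -> compm (alpha g) k = compm k (beta g).

(* Omega(F) is the class of alpha: alpha(g) = phi g phi^{-1} for some phi in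
   N_A(M) inducing F *)
Definition Omega_rel (M : group2) (F : Orb M -> Orb M) (alpha : map2 -> map2)
  : Prop :=
  exists phi, in_NA M phi /\ induces M phi F /\
    forall g, M g -> compm (alpha g) phi = compm phi g.

Definition compO {M : group2} (F G : Orb M -> Orb M) : Orb M -> Orb M :=
  fun O => F (G O).

(* Main.v *)
Require Import Defs.
From Stdlib Require Import Reals ZArith List.
From Stdlib Require Import Lra Lia Psatz.
From Stdlib Require Import FunctionalExtensionality PropExtensionality ProofIrrelevance ClassicalEpsilon.
Open Scope R_scope.

Lemma pair_eq (a b c d : R) : a = c -> b = d -> (a,b) = (c,d).
Proof. intros -> ->; reflexivity. Qed.

Lemma aff_comp (f g : map2) : is_affine f -> is_affine g -> is_affine (fun x => f (g x)).
Proof.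
  intros [a1 [a2 [m11 [m12 [m21 [m22 [Hd Hf]]]]]]] [b1 [b2 [n11 [n12 [n21 [n22 [Hd' Hg]]]]]]].
  exists (a1 + m11*b1 + m12*b2), (a2 + m21*b1 + m22*b2),
    (m11*n11 + m12*n21), (m11*n12+m12*n22), (m21*n11+m22*n21), (m21*n12+m22*n22).
  split.
  - intro H. apply (Rmult_integral_contrapositive_currified _ _ Hd Hd'). rewrite <- H. ring.
  - intro x. rewrite Hf, Hg. simpl. apply pair_eq; ring.
Qed.

Lemma aff_inv (f : map2) : is_affine f -> exists g, is_affine g /\
  (forall x, g (f x) = x) /\ (forall y, f (g y) = y).
Proof.
  intros [a1 [a2 [m11 [m12 [m21 [m22 [Hd Hf]]]]]]].
  set (d := m11 * m22 - m12 * m21) in *.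
  exists (fun y => ((m22*(fst y - a1) - m12*(snd y - a2))/d,
                    (- m21*(fst y - a1) + m11*(snd y - a2))/d)).
  split; [|split].
  - exists ((-m22*a1 + m12*a2)/d), ((m21*a1 - m11*a2)/d), (m22/d), (-m12/d), (-m21/d), (m11/d).
    split.
    + intro H. assert (E : m22 / d * (m11 / d) - - m12 / d * (- m21 / d) = 1 / d)
        by (unfold d in *; field; auto).
      rewrite E in H. unfold Rdiv in H. rewrite Rmult_1_l in H.
      apply (Rinv_neq_0_compat d Hd H).
    + intros [y1 y2]; simpl. apply pair_eq; unfold d in *; field; auto.
  - intros [x1 x2]. rewrite Hf. simpl. apply pair_eq; unfold d in *; field; auto.
  - intros [y1 y2]. rewrite Hf. simpl. apply pair_eq; unfold d in *; field; auto.
Qed.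

Definition sqd (p q : R2) : R := (fst p - fst q) ^ 2 + (snd p - snd q) ^ 2.

Lemma dist_sq (a b c d : R2) : dist2 a b = dist2 c d -> sqd a b = sqd c d.
Proof.
  unfold dist2, sqd. intro H. apply sqrt_inj; [| |exact H].
  - pose proof (pow2_ge_0 (fst a - fst b)); pose proof (pow2_ge_0 (snd a - snd b)); lra.
  - pose proof (pow2_ge_0 (fst c - fst d)); pose proof (pow2_ge_0 (snd c - snd d)); lra.
Qed.

Lemma iso_aff (f : map2) : (forall p q, dist2 (f p) (f q) = dist2 p q) ->
  exists a1 a2 p q r t, p*p + r*r = 1 /\ q*q + t*t = 1 /\ p*q + r*t = 0 /\
    forall x, f x = (a1 + p * fst x + q * snd x, a2 + r * fst x + t * snd x).
Proof.
  intro Hf.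
  destruct (f (0,0)) as [o1 o2] eqn:EO.
  destruct (f (1,0)) as [u1 u2] eqn:EU.
  destruct (f (0,1)) as [v1 v2] eqn:EV.
  exists o1, o2, (u1 - o1), (v1 - o1), (u2 - o2), (v2 - o2).
  assert (HU := dist_sq _ _ _ _ (Hf (1,0) (0,0))).
  assert (HV := dist_sq _ _ _ _ (Hf (0,1) (0,0))).
  assert (HUV := dist_sq _ _ _ _ (Hf (1,0) (0,1))).
  rewrite EO, EU, EV in *. unfold sqd in *; simpl in *.
  assert (E1 : (u1 - o1) * (u1 - o1) + (u2 - o2) * (u2 - o2) = 1) by nra.
  assert (E2 : (v1 - o1) * (v1 - o1) + (v2 - o2) * (v2 - o2) = 1) by nra.
  assert (E3 : (u1 - o1) * (v1 - o1) + (u2 - o2) * (v2 - o2) = 0) by nra.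
  split; [exact E1|split; [exact E2|split; [exact E3|]]].
  intros [x1 x2]. simpl.
  destruct (f (x1,x2)) as [w1 w2] eqn:EW.
  assert (HO := dist_sq _ _ _ _ (Hf (x1,x2) (0,0))).
  assert (HU' := dist_sq _ _ _ _ (Hf (x1,x2) (1,0))).
  assert (HV' := dist_sq _ _ _ _ (Hf (x1,x2) (0,1))).
  rewrite EO, EU, EV, EW in *. unfold sqd in *; simpl in *.
  set (p := u1 - o1) in *. set (r := u2 - o2) in *.
  set (q := v1 - o1) in *. set (t := v2 - o2) in *.
  set (y1 := w1 - o1). set (y2 := w2 - o2).
  assert (N : y1*y1 + y2*y2 = x1*x1 + x2*x2) by (unfold y1, y2; nra).
  assert (D1 : y1 * p + y2 * r = x1).
  { unfold y1, y2, p, r in *. nra. }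
  assert (D2 : y1 * q + y2 * t = x2).
  { unfold y1, y2, q, t in *. nra. }
  set (z1 := y1 - x1 * p - x2 * q). set (z2 := y2 - x1 * r - x2 * t).
  assert (Z : z1 * z1 + z2 * z2 = 0).
  { replace (z1 * z1 + z2 * z2) with
      ((y1*y1+y2*y2) - 2*x1*(y1*p+y2*r) - 2*x2*(y1*q+y2*t) + x1*x1*(p*p+r*r)
       + 2*x1*x2*(p*q+r*t) + x2*x2*(q*q+t*t)) by (unfold z1, z2; ring).
    rewrite N, D1, D2, E1, E2, E3. ring. }
  assert (Z1 : z1 = 0) by nra. assert (Z2 : z2 = 0) by nra.
  unfold z1, z2, y1, y2 in *. apply pair_eq; lra.
Qed.

Lemma iso_is_affine (f : map2) : is_isometry f -> is_affine f.
Proof.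
  intros [Hd _]. destruct (iso_aff f Hd) as [a1 [a2 [p [q [r [t [E1 [E2 [E3 Hf]]]]]]]]].
  exists a1, a2, p, q, r, t. split; [|exact Hf].
  intro H. assert (L : (p*t - q*r)^2 = 1).
  { replace ((p*t - q*r)^2) with ((p*p+r*r)*(q*q+t*t) - (p*q+r*t)^2) by ring.
    rewrite E1, E2, E3. ring. }
  rewrite H in L. lra.
Qed.

Definition sgn (e : R) : Prop := e = 1 \/ e = -1.

Section Pmm.
Variable s : R.
Hypothesis Hs : 0 < s.

Definition pm (e1 e2 : R) (k1 k2 : Z) : map2 :=
  fun x => (e1 * fst x + 2 * s * IZR k1, e2 * snd x + 2 * s * IZR k2).

Definition P := pmm_square s.

Lemma P_pm g : P g <-> exists e1 e2 k1 k2, sgn e1 /\ sgn e2 /\ g = pm e1 e2 k1 k2.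
Proof.
  unfold P, pmm_square. split.
  - intros [e1 [e2 [k1 [k2 [H1 [H2 H]]]]]]. exists e1, e2, k1, k2. repeat split; auto.
    apply functional_extensionality. exact H.
  - intros [e1 [e2 [k1 [k2 [H1 [H2 H]]]]]]. exists e1, e2, k1, k2. repeat split; auto.
    intro x. rewrite H. reflexivity.
Qed.

Lemma P_pm' e1 e2 k1 k2 : sgn e1 -> sgn e2 -> P (pm e1 e2 k1 k2).
Proof. intros. apply P_pm. exists e1, e2, k1, k2. auto. Qed.

Lemma int_eq k l : s * IZR k = s * IZR l -> k = l.
Proof. intro H. apply eq_IZR. apply Rmult_eq_reg_l with s; lra. Qed.

Lemma c_comp e f k l : sgn e -> sgn f -> exists g m, sgn g /\
  forall t, e * (f * t + 2 * s * IZR l) + 2 * s * IZR k = g * t + 2 * s * IZR m.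
Proof.
  intros [-> | ->] [-> | ->].
  - exists 1, (k + l)%Z. split; [left; auto|]. intro; rewrite plus_IZR; ring.
  - exists (-1), (k + l)%Z. split; [right; auto|]. intro; rewrite plus_IZR; ring.
  - exists (-1), (k - l)%Z. split; [right; auto|]. intro; rewrite minus_IZR; ring.
  - exists 1, (k - l)%Z. split; [left; auto|]. intro; rewrite minus_IZR; ring.
Qed.

Lemma c_inv e k : sgn e -> exists f l, sgn f /\
  forall t, f * (e * t + 2 * s * IZR k) + 2 * s * IZR l = t.
Proof.
  intros [-> | ->].
  - exists 1, (- k)%Z. split; [left; auto|]. intro; rewrite opp_IZR; ring.
  - exists (-1), k. split; [right; auto|]. intro; ring.
Qed.

Definition idm : map2 := fun x => x.

Lemma P_id : P idm.
Proof. exists 1, 1, 0%Z, 0%Z. repeat split; try (left; reflexivity).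
  intros [x1 x2]; unfold idm; simpl. apply pair_eq; ring. Qed.

Lemma P_comp g h : P g -> P h -> P (compm g h).
Proof.
  intros [e1 [e2 [k1 [k2 [H1 [H2 Hg]]]]]] [f1 [f2 [l1 [l2 [G1 [G2 Hh]]]]]].
  destruct (c_comp e1 f1 k1 l1 H1 G1) as [g1 [m1 [S1 E1]]].
  destruct (c_comp e2 f2 k2 l2 H2 G2) as [g2 [m2 [S2 E2]]].
  exists g1, g2, m1, m2. repeat split; auto.
  intros x. unfold compm. rewrite Hg, Hh. simpl. rewrite E1, E2. reflexivity.
Qed.

Lemma P_inv g : P g -> exists h, P h /\ (forall x, h (g x) = x) /\ (forall x, g (h x) = x).
Proof.
  intros [e1 [e2 [k1 [k2 [H1 [H2 Hg]]]]]].
  destruct (c_inv e1 k1 H1) as [f1 [l1 [S1 E1]]].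
  destruct (c_inv e2 k2 H2) as [f2 [l2 [S2 E2]]].
  exists (pm f1 f2 l1 l2). split; [apply P_pm'; auto|split].
  - intros [x1 x2]. rewrite Hg. unfold pm; simpl. rewrite E1, E2. reflexivity.
  - intros [x1 x2]. rewrite Hg. unfold pm; simpl.
    destruct H1 as [-> | ->], H2 as [-> | ->], S1 as [-> | ->], S2 as [-> | ->];
    pose proof (E1 0); pose proof (E1 1); pose proof (E2 0); pose proof (E2 1);
    apply pair_eq; lra.
Qed.


Definition fl (b : bool) (t : R) : R := if b then s - t else t.
Definition nf (sw : bool) (e1 e2 : R) (j1 j2 : Z) : map2 :=
  fun x => (e1 * (if sw then snd x else fst x) + s * IZR j1,
            e2 * (if sw then fst x else snd x) + s * IZR j2).
Definition can (sw b1 b2 : bool) : map2 :=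
  fun x => (fl b1 (if sw then snd x else fst x), fl b2 (if sw then fst x else snd x)).

Lemma sgn_cases e : sgn e -> e = 1 \/ e = -1.
Proof. auto. Qed.

Lemma c_can e j : sgn e -> exists f k, sgn f /\
  forall t, e * t + s * IZR j = f * fl (Z.odd j) t + 2 * s * IZR k.
Proof.
  intro He. pose proof (Z.div2_odd j) as Ej.
  set (m := Z.div2 j) in *.
  destruct (Z.odd j) eqn:Eo; cbn [Z.b2z] in Ej; unfold fl.
  - destruct He as [-> | ->].
    + exists (-1), (m + 1)%Z. split; [right; auto|]. intro t.
      rewrite Ej, !plus_IZR, !mult_IZR. simpl. ring.
    + exists 1, m. split; [left; auto|]. intro t.
      rewrite Ej, !plus_IZR, !mult_IZR. simpl. ring.
  - exists e, m. split; auto. intro t. rewrite Ej, Z.add_0_r, mult_IZR. simpl. ring.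
Qed.

Lemma nf_can sw e1 e2 j1 j2 : sgn e1 -> sgn e2 -> exists h, P h /\
  forall x, nf sw e1 e2 j1 j2 x = h (can sw (Z.odd j1) (Z.odd j2) x).
Proof.
  intros H1 H2.
  destruct (c_can e1 j1 H1) as [f1 [k1 [S1 E1]]].
  destruct (c_can e2 j2 H2) as [f2 [k2 [S2 E2]]].
  exists (pm f1 f2 k1 k2). split; [apply P_pm'; auto|].
  intro x. unfold nf, can, pm. simpl. rewrite E1, E2. reflexivity.
Qed.

Lemma c_norm e j f : sgn e -> sgn f ->
  (forall l, exists k, forall t,
     e * (f * t + 2 * s * IZR l) + s * IZR j = f * (e * t + s * IZR j) + 2 * s * IZR k) /\
  (forall k, exists l, forall t,
     e * (f * t + 2 * s * IZR l) + s * IZR j = f * (e * t + s * IZR j) + 2 * s * IZR k).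
Proof.
  intros He Hf. split.
  - intro l. destruct He as [-> | ->], Hf as [-> | ->].
    + exists l. intro; ring.
    + exists (l + j)%Z. intro; rewrite plus_IZR; ring.
    + exists (- l)%Z. intro; rewrite opp_IZR; ring.
    + exists (j - l)%Z. intro; rewrite minus_IZR; ring.
  - intro k. destruct He as [-> | ->], Hf as [-> | ->].
    + exists k. intro; ring.
    + exists (k - j)%Z. intro; rewrite minus_IZR; ring.
    + exists (- k)%Z. intro; rewrite opp_IZR; ring.
    + exists (j - k)%Z. intro; rewrite minus_IZR; ring.
Qed.

Lemma nf_norm sw e1 e2 j1 j2 : sgn e1 -> sgn e2 -> normalizes P (nf sw e1 e2 j1 j2).
Proof.
  intros H1 H2. split.
  - intros g Hg. apply P_pm in Hg. destruct Hg as [f1 [f2 [l1 [l2 [G1 [G2 ->]]]]]].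
    destruct sw.
    + destruct (proj1 (c_norm e1 j1 f2 H1 G2) l2) as [k1 E1].
      destruct (proj1 (c_norm e2 j2 f1 H2 G1) l1) as [k2 E2].
      exists (pm f2 f1 k1 k2). split; [apply P_pm'; auto|].
      intro x. unfold nf, pm; simpl. rewrite E1, E2. reflexivity.
    + destruct (proj1 (c_norm e1 j1 f1 H1 G1) l1) as [k1 E1].
      destruct (proj1 (c_norm e2 j2 f2 H2 G2) l2) as [k2 E2].
      exists (pm f1 f2 k1 k2). split; [apply P_pm'; auto|].
      intro x. unfold nf, pm; simpl. rewrite E1, E2. reflexivity.
  - intros h Hh. apply P_pm in Hh. destruct Hh as [f1 [f2 [k1 [k2 [G1 [G2 ->]]]]]].
    destruct sw.
    + destruct (proj2 (c_norm e1 j1 f1 H1 G1) k1) as [l1 E1].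
      destruct (proj2 (c_norm e2 j2 f2 H2 G2) k2) as [l2 E2].
      exists (pm f2 f1 l2 l1). split; [apply P_pm'; auto|].
      intro x. unfold nf, pm; simpl. rewrite E1, E2. reflexivity.
    + destruct (proj2 (c_norm e1 j1 f1 H1 G1) k1) as [l1 E1].
      destruct (proj2 (c_norm e2 j2 f2 H2 G2) k2) as [l2 E2].
      exists (pm f1 f2 l1 l2). split; [apply P_pm'; auto|].
      intro x. unfold nf, pm; simpl. rewrite E1, E2. reflexivity.
Qed.

Lemma nf_aff sw e1 e2 j1 j2 : sgn e1 -> sgn e2 -> is_affine (nf sw e1 e2 j1 j2).
Proof.
  intros H1 H2. destruct sw.
  - exists (s * IZR j1), (s * IZR j2), 0, e1, e2, 0. split.
    + destruct H1 as [-> | ->], H2 as [-> | ->]; lra.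
    + intros [x1 x2]; unfold nf; simpl. apply pair_eq; ring.
  - exists (s * IZR j1), (s * IZR j2), e1, 0, 0, e2. split.
    + destruct H1 as [-> | ->], H2 as [-> | ->]; lra.
    + intros [x1 x2]; unfold nf; simpl. apply pair_eq; ring.
Qed.

Lemma nf_iso sw e1 e2 j1 j2 : sgn e1 -> sgn e2 ->
  forall x y, dist2 (nf sw e1 e2 j1 j2 x) (nf sw e1 e2 j1 j2 y) = dist2 x y.
Proof.
  intros H1 H2 [x1 x2] [y1 y2]. unfold dist2, nf. simpl. f_equal.
  destruct sw; destruct H1 as [-> | ->], H2 as [-> | ->]; ring.
Qed.

Lemma can_nf sw b1 b2 : exists e1 e2 j1 j2, sgn e1 /\ sgn e2 /\
  forall x, can sw b1 b2 x = nf sw e1 e2 j1 j2 x.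
Proof.
  exists (if b1 then -1 else 1), (if b2 then -1 else 1),
    (if b1 then 1 else 0)%Z, (if b2 then 1 else 0)%Z.
  split; [destruct b1; [right|left]; auto|split; [destruct b2; [right|left]; auto|]].
  intros [x1 x2]. unfold can, nf, fl. destruct sw, b1, b2; simpl; apply pair_eq; ring.
Qed.

Definition phiA (a1 a2 m11 m12 m21 m22 : R) : map2 :=
  fun x => (a1 + m11 * fst x + m12 * snd x, a2 + m21 * fst x + m22 * snd x).

Lemma conj_eqs a1 a2 m11 m12 m21 m22 e1 e2 f1 f2 k1 k2 l1 l2 :
  (forall x, phiA a1 a2 m11 m12 m21 m22 (pm e1 e2 k1 k2 x) =
             pm f1 f2 l1 l2 (phiA a1 a2 m11 m12 m21 m22 x)) ->
  m11 * e1 = f1 * m11 /\ m12 * e2 = f1 * m12 /\ m21 * e1 = f2 * m21 /\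
  m22 * e2 = f2 * m22 /\
  a1 + 2 * s * (m11 * IZR k1 + m12 * IZR k2) = f1 * a1 + 2 * s * IZR l1 /\
  a2 + 2 * s * (m21 * IZR k1 + m22 * IZR k2) = f2 * a2 + 2 * s * IZR l2.
Proof.
  intro H. pose proof (H (0,0)) as A. pose proof (H (1,0)) as B. pose proof (H (0,1)) as C.
  unfold phiA, pm in A, B, C; simpl in A, B, C.
  injection A as A1 A2. injection B as B1 B2. injection C as C1 C2.
  repeat split; lra.
Qed.

Lemma int_sgn (m : R) (z l : Z) : m = IZR z -> m * IZR l = 1 -> sgn m.
Proof.
  intros -> H. rewrite <- mult_IZR in H. apply eq_IZR in H.
  destruct (Z.eq_mul_1 _ _ H) as [-> | ->]; [left|right]; reflexivity.
Qed.

Lemma two_s_int m l : 2 * s * m = 2 * s * IZR l -> m = IZR l.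
Proof. intro H. apply Rmult_eq_reg_l with (2 * s); lra. Qed.

Ltac sgnt := first [left; reflexivity | right; reflexivity].

Lemma classify (phi : map2) : is_affine phi -> normalizes P phi ->
  exists sw e1 e2 j1 j2, sgn e1 /\ sgn e2 /\ forall x, phi x = nf sw e1 e2 j1 j2 x.
Proof.
  intros [a1 [a2 [m11 [m12 [m21 [m22 [Hd Hphi]]]]]]] [Nf Nr].
  assert (E : phi = phiA a1 a2 m11 m12 m21 m22).
  { apply functional_extensionality. intro x. rewrite Hphi. reflexivity. }
  subst phi. clear Hphi.
  destruct (Nf (pm 1 1 1 0) (P_pm' _ _ 1 0 ltac:(sgnt) ltac:(sgnt))) as [h [Hh Eh]].
  apply P_pm in Hh. destruct Hh as [f1 [f2 [l1 [l2 [S1 [S2 ->]]]]]].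
  apply conj_eqs in Eh. simpl in Eh. destruct Eh as (A1 & A2 & A3 & A4 & A5 & A6).
  assert (F1 : f1 = 1).
  { destruct S1 as [-> | ->]; auto. exfalso. apply Hd.
    assert (m11 = 0) by lra. assert (m12 = 0) by lra. subst. ring. }
  assert (F2 : f2 = 1).
  { destruct S2 as [-> | ->]; auto. exfalso. apply Hd.
    assert (m21 = 0) by lra. assert (m22 = 0) by lra. subst. ring. }
  subst f1 f2.
  assert (Z11 : m11 = IZR l1) by (apply two_s_int; lra).
  assert (Z21 : m21 = IZR l2) by (apply two_s_int; lra).
  clear A1 A2 A3 A4 A5 A6 S1 S2.
  destruct (Nf (pm 1 1 0 1) (P_pm' _ _ 0 1 ltac:(sgnt) ltac:(sgnt))) as [h [Hh Eh]].
  apply P_pm in Hh. destruct Hh as [f1 [f2 [l3 [l4 [S1 [S2 ->]]]]]].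
  apply conj_eqs in Eh. simpl in Eh. destruct Eh as (A1 & A2 & A3 & A4 & A5 & A6).
  assert (F1 : f1 = 1).
  { destruct S1 as [-> | ->]; auto. exfalso. apply Hd.
    assert (m11 = 0) by lra. assert (m12 = 0) by lra. rewrite H, H0. ring. }
  assert (F2 : f2 = 1).
  { destruct S2 as [-> | ->]; auto. exfalso. apply Hd.
    assert (m21 = 0) by lra. assert (m22 = 0) by lra. rewrite H, H0. ring. }
  subst f1 f2.
  assert (Z12 : m12 = IZR l3) by (apply two_s_int; lra).
  assert (Z22 : m22 = IZR l4) by (apply two_s_int; lra).
  clear A1 A2 A3 A4 A5 A6 S1 S2.
  destruct (Nr (pm 1 1 1 0) (P_pm' _ _ 1 0 ltac:(sgnt) ltac:(sgnt))) as [g [Hg Eg]].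
  apply P_pm in Hg. destruct Hg as [f1 [f2 [n1 [n2 [S1 [S2 ->]]]]]].
  apply conj_eqs in Eg. simpl in Eg. destruct Eg as (A1 & A2 & A3 & A4 & A5 & A6).
  assert (F1 : f1 = 1).
  { destruct S1 as [-> | ->]; auto. exfalso. apply Hd.
    assert (m11 = 0) by lra. assert (m21 = 0) by lra. rewrite H, H0. ring. }
  assert (F2 : f2 = 1).
  { destruct S2 as [-> | ->]; auto. exfalso. apply Hd.
    assert (m12 = 0) by lra. assert (m22 = 0) by lra. rewrite H, H0. ring. }
  subst f1 f2.
  assert (R1 : m11 * IZR n1 + m12 * IZR n2 = 1) by (apply Rmult_eq_reg_l with (2*s); lra).
  assert (R2 : m21 * IZR n1 + m22 * IZR n2 = 0) by (apply Rmult_eq_reg_l with (2*s); lra).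
  clear A1 A2 A3 A4 A5 A6 S1 S2.
  destruct (Nr (pm 1 1 0 1) (P_pm' _ _ 0 1 ltac:(sgnt) ltac:(sgnt))) as [g [Hg Eg]].
  apply P_pm in Hg. destruct Hg as [f1 [f2 [n3 [n4 [S1 [S2 ->]]]]]].
  apply conj_eqs in Eg. simpl in Eg. destruct Eg as (A1 & A2 & A3 & A4 & A5 & A6).
  assert (F1 : f1 = 1).
  { destruct S1 as [-> | ->]; auto. exfalso. apply Hd.
    assert (m11 = 0) by lra. assert (m21 = 0) by lra. rewrite H, H0. ring. }
  assert (F2 : f2 = 1).
  { destruct S2 as [-> | ->]; auto. exfalso. apply Hd.
    assert (m12 = 0) by lra. assert (m22 = 0) by lra. rewrite H, H0. ring. }
  subst f1 f2.
  assert (R3 : m11 * IZR n3 + m12 * IZR n4 = 0) by (apply Rmult_eq_reg_l with (2*s); lra).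
  assert (R4 : m21 * IZR n3 + m22 * IZR n4 = 1) by (apply Rmult_eq_reg_l with (2*s); lra).
  clear A1 A2 A3 A4 A5 A6 S1 S2.
  destruct (Nf (pm (-1) 1 0 0) (P_pm' (-1) 1 0 0 ltac:(sgnt) ltac:(sgnt))) as [h [Hh Eh]].
  apply P_pm in Hh. destruct Hh as [f1 [f2 [l5 [l6 [S1 [S2 ->]]]]]].
  apply conj_eqs in Eh. simpl in Eh. destruct Eh as (A1 & A2 & A3 & A4 & A5 & A6).
  destruct (Nf (pm 1 (-1) 0 0) (P_pm' 1 (-1) 0 0 ltac:(sgnt) ltac:(sgnt))) as [h [Hh Eh]].
  apply P_pm in Hh. destruct Hh as [g1 [g2 [l7 [l8 [T1 [T2 ->]]]]]].
  apply conj_eqs in Eh. simpl in Eh. destruct Eh as (B1 & B2 & B3 & B4 & B5 & B6).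
  destruct S1 as [-> | ->], S2 as [-> | ->].
  - exfalso. apply Hd. assert (m11 = 0) by lra. assert (m21 = 0) by lra.
    rewrite H, H0. ring.
  -
    assert (M11 : m11 = 0) by lra. assert (M22 : m22 = 0) by lra.
    assert (G1 : g1 = -1).
    { destruct T1 as [-> | ->]; auto. exfalso. apply Hd.
      assert (m12 = 0) by lra. rewrite H, M11. ring. }
    subst g1.
    exists true, m12, m21, l7, l6. split; [|split].
    + apply (int_sgn m12 l3 n2 Z12). rewrite M11 in R1. lra.
    + apply (int_sgn m21 l2 n3 Z21). rewrite M22 in R4. lra.
    + intros [x1 x2]. unfold phiA, nf; simpl. apply pair_eq.
      * assert (a1 = s * IZR l7) by (apply Rmult_eq_reg_l with 2; lra).
        rewrite M11. lra.
      * assert (a2 = s * IZR l6) by (apply Rmult_eq_reg_l with 2; lra).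
        rewrite M22. lra.
  -
    assert (M12 : m12 = 0) by lra. assert (M21 : m21 = 0) by lra.
    assert (G2 : g2 = -1).
    { destruct T2 as [-> | ->]; auto. exfalso. apply Hd.
      assert (m22 = 0) by lra. rewrite H, M21. ring. }
    subst g2.
    exists false, m11, m22, l5, l8. split; [|split].
    + apply (int_sgn m11 l1 n1 Z11). rewrite M12 in R1. lra.
    + apply (int_sgn m22 l4 n4 Z22). rewrite M21 in R4. lra.
    + intros [x1 x2]. unfold phiA, nf; simpl. apply pair_eq.
      * assert (a1 = s * IZR l5) by (apply Rmult_eq_reg_l with 2; lra).
        rewrite M12. lra.
      * assert (a2 = s * IZR l8) by (apply Rmult_eq_reg_l with 2; lra).
        rewrite M21. lra.
  - exfalso. apply Hd. assert (m12 = 0) by lra. assert (m22 = 0) by lra.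
    rewrite H, H0. ring.
Qed.

Lemma sep1 u v e k : 0 < u < s -> 0 < v < s -> sgn e -> u = e * v + 2 * s * IZR k -> u = v.
Proof.
  intros Hu Hv [-> | ->] E.
  - assert (IZR k < 1) by nra. assert (-1 < IZR k) by nra.
    apply lt_IZR in H. apply lt_IZR in H0. assert (k = 0%Z) by lia. subst k. simpl in E. lra.
  - assert (IZR k < 1) by nra. assert (0 < IZR k) by nra.
    apply lt_IZR in H. apply lt_IZR in H0. lia.
Qed.

Lemma sep h u v : P h -> 0 < fst u < s -> 0 < snd u < s -> 0 < fst v < s -> 0 < snd v < s ->
  u = h v -> u = v.
Proof.
  intros Hh U1 U2 V1 V2 E. apply P_pm in Hh.
  destruct Hh as [e1 [e2 [k1 [k2 [S1 [S2 ->]]]]]].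
  destruct u as [u1 u2], v as [v1 v2]. unfold pm in E; simpl in *.
  injection E as E1 E2. apply pair_eq.
  - apply (sep1 u1 v1 e1 k1); auto.
  - apply (sep1 u2 v2 e2 k2); auto.
Qed.

Lemma central c : is_affine c -> (forall h, P h -> forall x, c (h x) = h (c x)) ->
  forall x, c x = x.
Proof.
  intros [a1 [a2 [m11 [m12 [m21 [m22 [Hd Hc]]]]]]] H.
  assert (E : c = phiA a1 a2 m11 m12 m21 m22).
  { apply functional_extensionality. intro x. rewrite Hc. reflexivity. }
  subst c. clear Hc.
  pose proof (conj_eqs _ _ _ _ _ _ _ _ _ _ _ _ _ _ (H _ (P_pm' 1 1 1 0 ltac:(sgnt) ltac:(sgnt)))) as A.
  pose proof (conj_eqs _ _ _ _ _ _ _ _ _ _ _ _ _ _ (H _ (P_pm' 1 1 0 1 ltac:(sgnt) ltac:(sgnt)))) as B.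
  pose proof (conj_eqs _ _ _ _ _ _ _ _ _ _ _ _ _ _ (H _ (P_pm' (-1) 1 0 0 ltac:(sgnt) ltac:(sgnt)))) as C.
  pose proof (conj_eqs _ _ _ _ _ _ _ _ _ _ _ _ _ _ (H _ (P_pm' 1 (-1) 0 0 ltac:(sgnt) ltac:(sgnt)))) as D.
  simpl in A, B, C, D.
  destruct A as (_ & _ & _ & _ & A5 & A6). destruct B as (_ & _ & _ & _ & B5 & B6).
  destruct C as (_ & _ & _ & _ & C5 & _). destruct D as (_ & _ & _ & _ & _ & D6).
  assert (m11 = 1) by (apply Rmult_eq_reg_l with (2*s); lra).
  assert (m21 = 0) by (apply Rmult_eq_reg_l with (2*s); lra).
  assert (m12 = 0) by (apply Rmult_eq_reg_l with (2*s); lra).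
  assert (m22 = 1) by (apply Rmult_eq_reg_l with (2*s); lra).
  assert (a1 = 0) by lra. assert (a2 = 0) by lra.
  intros [x1 x2]. unfold phiA; simpl. subst. apply pair_eq; ring.
Qed.

Definition Rf (tau : bool) (y : Z) : map2 := if tau then pm 1 (-1) 0 y else pm (-1) 1 y 0.

Definition refl (h : map2) : Prop :=
  compm h h = idm /\ h <> idm /\ exists g, P g /\ compm g h = compm h g /\ compm g g <> idm.

Lemma Rf_P tau y : P (Rf tau y).
Proof. destruct tau; apply P_pm'; sgnt. Qed.

Lemma pt_eq (f g : map2) : f = g -> forall x, f x = g x.
Proof. intros ->; reflexivity. Qed.

Lemma Rf_refl tau y : refl (Rf tau y).
Proof.
  split; [|split].
  - apply functional_extensionality. intros [x1 x2].
    destruct tau; unfold compm, Rf, pm, idm; simpl; apply pair_eq; ring.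
  - intro H. pose proof (pt_eq _ _ H (1,1)) as E. pose proof (pt_eq _ _ H (0,0)) as F.
    destruct tau; unfold Rf, pm, idm in E, F; simpl in E, F; injection E as E1 E2;
    injection F as F1 F2; lra.
  - exists (if tau then pm 1 1 1 0 else pm 1 1 0 1). split; [destruct tau; apply P_pm'; sgnt|split].
    + apply functional_extensionality. intros [x1 x2].
      destruct tau; unfold compm, Rf, pm; simpl; apply pair_eq; ring.
    + intro H. pose proof (pt_eq _ _ H (0,0)) as E.
      destruct tau; unfold compm, pm, idm in E; simpl in E; injection E as E1 E2; lra.
Qed.

Lemma IZR0 k : s * IZR k = 0 -> k = 0%Z.
Proof. intro H. apply eq_IZR. simpl. apply Rmult_eq_reg_l with s; lra. Qed.

Lemma refl_class h : P h -> refl h -> exists tau y, h = Rf tau y.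
Proof.
  intros Hh [HH [Hn [g [Hg [Hc Hgg]]]]]. apply P_pm in Hh.
  destruct Hh as [e1 [e2 [k1 [k2 [S1 [S2 ->]]]]]].
  pose proof (pt_eq _ _ HH (0,0)) as E. unfold compm, pm, idm in E; simpl in E.
  injection E as E1 E2.
  destruct S1 as [-> | ->], S2 as [-> | ->].
  - exfalso. apply Hn. assert (k1 = 0%Z) by (apply IZR0; lra).
    assert (k2 = 0%Z) by (apply IZR0; lra). subst.
    apply functional_extensionality. intros [x1 x2]; unfold pm, idm; simpl; apply pair_eq; ring.
  - assert (k1 = 0%Z) by (apply IZR0; lra). subst. exists true, k2. reflexivity.
  - assert (k2 = 0%Z) by (apply IZR0; lra). subst. exists false, k1. reflexivity.
  - exfalso. apply Hgg. apply P_pm in Hg. destruct Hg as [f1 [f2 [l1 [l2 [T1 [T2 ->]]]]]].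
    pose proof (pt_eq _ _ Hc (0,0)) as C. unfold compm, pm in C; simpl in C.
    injection C as C1 C2.
    apply functional_extensionality. intros [x1 x2]; unfold compm, pm, idm; simpl.
    apply pair_eq; [destruct T1 as [-> | ->] | destruct T2 as [-> | ->]]; lra.
Qed.

Lemma Rf_comm_diff tau y y' :
  compm (Rf tau y) (Rf (negb tau) y') = compm (Rf (negb tau) y') (Rf tau y).
Proof.
  apply functional_extensionality. intros [x1 x2].
  destruct tau; unfold compm, Rf, pm; simpl; apply pair_eq; ring.
Qed.

Lemma Rf_comm_same tau y y' :
  compm (Rf tau y) (Rf tau y') = compm (Rf tau y') (Rf tau y) -> y = y'.
Proof.
  intro H. pose proof (pt_eq _ _ H (0,0)) as E.
  destruct tau; unfold compm, Rf, pm in E; simpl in E; injection E; intros;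
  apply eq_IZR; apply Rmult_eq_reg_l with (4*s); lra.
Qed.

Lemma Rf_neq tau y y' : Rf tau y <> Rf (negb tau) y'.
Proof.
  intro H. pose proof (pt_eq _ _ H (0,0)) as E. pose proof (pt_eq _ _ H (1,1)) as F.
  destruct tau; unfold Rf, pm in E, F; simpl in E, F; injection E as E1 E2;
  injection F as F1 F2; lra.
Qed.

Lemma Rf_inj tau y y' : Rf tau y = Rf tau y' -> y = y'.
Proof.
  intro H. pose proof (pt_eq _ _ H (0,0)) as E.
  destruct tau; unfold Rf, pm in E; simpl in E; injection E; intros;
  apply eq_IZR; apply Rmult_eq_reg_l with (2*s); lra.
Qed.

Lemma Rf_triple tau a b c :
  compm (Rf tau a) (compm (Rf tau b) (Rf tau c)) = Rf tau (a - b + c)%Z.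
Proof.
  apply functional_extensionality. intros [x1 x2].
  destruct tau; unfold compm, Rf, pm; simpl; rewrite plus_IZR, minus_IZR; apply pair_eq; ring.
Qed.

Lemma P_gen (Q : map2 -> Prop) : (forall a, Q (Rf false a)) -> (forall b, Q (Rf true b)) ->
  (forall g h, P g -> P h -> Q g -> Q h -> Q (compm g h)) -> forall h, P h -> Q h.
Proof.
  intros Q1 Q2 Qc h Hh. apply P_pm in Hh.
  destruct Hh as [e1 [e2 [k1 [k2 [S1 [S2 ->]]]]]].
  assert (E : pm e1 e2 k1 k2 = compm (pm e1 1 k1 0) (pm 1 e2 0 k2)).
  { apply functional_extensionality. intros [x1 x2]; unfold compm, pm; simpl; apply pair_eq; ring. }
  rewrite E. apply Qc; try (apply P_pm'; auto; sgnt).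
  - destruct S1 as [-> | ->].
    + assert (E' : pm 1 1 k1 0 = compm (Rf false k1) (Rf false 0)).
      { apply functional_extensionality. intros [x1 x2]; unfold compm, Rf, pm; simpl; apply pair_eq; ring. }
      rewrite E'. apply Qc; auto; apply Rf_P.
    + apply (Q1 k1).
  - destruct S2 as [-> | ->].
    + assert (E' : pm 1 1 0 k2 = compm (Rf true k2) (Rf true 0)).
      { apply functional_extensionality. intros [x1 x2]; unfold compm, Rf, pm; simpl; apply pair_eq; ring. }
      rewrite E'. apply Qc; auto; apply Rf_P.
    + apply (Q2 k2).
Qed.

Lemma affZ (f : Z -> Z) : (forall a b c, f (a - b + c)%Z = (f a - f b + f c)%Z) ->
  (forall y, exists a, f a = y) ->
  exists eps, (eps = 1 \/ eps = -1)%Z /\ forall a, f a = (f 0 + eps * a)%Z.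
Proof.
  intros Ha Hs'.
  assert (L : forall a, f a = (f 0 + (f 1 - f 0) * a)%Z).
  { intro a. induction a using Z.peano_ind.
    - lia.
    - replace (Z.succ a) with (a - 0 + 1)%Z by lia. rewrite Ha. lia.
    - replace (Z.pred a) with (a - 1 + 0)%Z by lia. rewrite Ha. lia. }
  destruct (Hs' (f 0 + 1)%Z) as [a Ea]. rewrite L in Ea.
  assert (E : ((f 1 - f 0) * a = 1)%Z) by lia.
  exists (f 1 - f 0)%Z. split; [apply (Z.eq_mul_1 _ _ E)|exact L].
Qed.

Lemma aut_P (beta : map2 -> map2) : is_aut P beta ->
  exists sw e1 e2 j1 j2, sgn e1 /\ sgn e2 /\
    forall h, P h -> forall x, beta h (nf sw e1 e2 j1 j2 x) = nf sw e1 e2 j1 j2 (h x).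
Proof.
  intros [Bin [Binj [Bsur Bhom]]].
  assert (Bid : beta idm = idm).
  { assert (E := Bhom idm idm P_id P_id).
    change (compm idm idm) with idm in E.
    destruct (P_inv _ (Bin _ P_id)) as [b' [_ [Hb' _]]].
    apply functional_extensionality. intro x.
    pose proof (pt_eq _ _ E x) as Ex. unfold compm in Ex.
    transitivity (b' (beta idm (beta idm x))).
    - symmetry. apply Hb'.
    - rewrite <- Ex. apply Hb'. }
  assert (Brefl : forall h, P h -> refl h -> refl (beta h)).
  { intros h Hh [HH [Hn [g [Hg [Hc Hgg]]]]]. split; [|split].
    - rewrite <- Bhom, HH; auto.
    - intro E. apply Hn. apply Binj; auto. apply P_id. rewrite E, Bid. reflexivity.
    - exists (beta g). split; auto. split.
      + rewrite <- !Bhom, Hc; auto.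
      + rewrite <- Bhom; auto. intro E. apply Hgg. apply Binj; auto.
        apply P_comp; auto. apply P_id. rewrite E, Bid; reflexivity. }
  assert (Brefl' : forall h, P h -> refl (beta h) -> refl h).
  { intros h Hh [HH [Hn [g' [Hg' [Hc Hgg]]]]].
    destruct (Bsur g' Hg') as [g [Hg <-]]. split; [|split].
    - apply Binj; auto. apply P_comp; auto. apply P_id. rewrite Bhom, HH, Bid; auto.
    - intro E. apply Hn. rewrite E. exact Bid.
    - exists g. split; auto. split.
      + apply Binj; try apply P_comp; auto. rewrite !Bhom; auto.
      + intro E. apply Hgg. rewrite <- Bhom, E; auto. }
  destruct (refl_class _ (Bin _ (Rf_P false 0)) (Brefl _ (Rf_P false 0) (Rf_refl false 0)))
    as [sig [c0 Hc0]].
  assert (Fam1 : forall a, exists y, beta (Rf false a) = Rf sig y).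
  { intro a.
    destruct (refl_class _ (Bin _ (Rf_P false a)) (Brefl _ (Rf_P false a) (Rf_refl false a)))
      as [tau [y Hy]].
    destruct (Bool.bool_dec tau sig) as [<- | Hne]; [exists y; exact Hy|].
    exfalso. assert (Et : tau = negb sig) by (destruct tau, sig; auto; congruence).
    subst tau.
    assert (C : compm (Rf false a) (Rf false 0) = compm (Rf false 0) (Rf false a)).
    { apply Binj; try apply P_comp; try apply Rf_P. rewrite !Bhom; try apply Rf_P.
      rewrite Hy, Hc0. symmetry. apply Rf_comm_diff. }
    apply Rf_comm_same in C. subst a.
    apply (Rf_neq sig c0 y). rewrite <- Hc0, <- Hy. reflexivity. }
  assert (Fam2 : forall b, exists y, beta (Rf true b) = Rf (negb sig) y).
  { intro b.
    destruct (refl_class _ (Bin _ (Rf_P true b)) (Brefl _ (Rf_P true b) (Rf_refl true b)))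
      as [tau [y Hy]].
    destruct (Bool.bool_dec tau (negb sig)) as [<- | Hne]; [exists y; exact Hy|].
    exfalso. assert (Et : tau = sig) by (destruct tau, sig; auto; simpl in Hne; congruence).
    subst tau.
    assert (C : compm (Rf sig y) (Rf sig c0) = compm (Rf sig c0) (Rf sig y)).
    { rewrite <- Hy, <- Hc0, <- !Bhom; try apply Rf_P. f_equal.
      apply (Rf_comm_diff true b 0). }
    apply Rf_comm_same in C. subst y.
    apply (Rf_neq true b 0). apply Binj; try apply Rf_P. change (negb true) with false. rewrite Hy, Hc0. reflexivity. }
  set (f := fun a => proj1_sig (constructive_indefinite_description _ (Fam1 a))).
  set (g := fun b => proj1_sig (constructive_indefinite_description _ (Fam2 b))).
  assert (Hf : forall a, beta (Rf false a) = Rf sig (f a)).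
  { intro a. unfold f. destruct (constructive_indefinite_description _ (Fam1 a)). auto. }
  assert (Hg : forall b, beta (Rf true b) = Rf (negb sig) (g b)).
  { intro b. unfold g. destruct (constructive_indefinite_description _ (Fam2 b)). auto. }
  clearbody f g.
  assert (Tri : forall tau (F : Z -> Z) sig', (forall a, beta (Rf tau a) = Rf sig' (F a)) ->
    forall a b c, F (a - b + c)%Z = (F a - F b + F c)%Z).
  { intros tau F sig' HF a b c. apply (Rf_inj sig').
    rewrite <- Rf_triple, <- !HF, <- Rf_triple, !Bhom; auto; try apply Rf_P; apply P_comp; apply Rf_P. }
  assert (Sur : forall tau (F : Z -> Z) (G : Z -> Z) sig',
    (forall a, beta (Rf tau a) = Rf sig' (F a)) ->
    (forall a, beta (Rf (negb tau) a) = Rf (negb sig') (G a)) -> forall y, exists a, F a = y).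
  { intros tau F G sig' HF HG y.
    destruct (Bsur _ (Rf_P sig' y)) as [h [Hh Eh]].
    assert (Rh : refl h) by (apply Brefl'; auto; rewrite Eh; apply Rf_refl).
    destruct (refl_class h Hh Rh) as [tau' [a Ha]]. subst h.
    destruct (Bool.bool_dec tau' tau) as [-> | Hne].
    - exists a. apply (Rf_inj sig'). rewrite <- HF. exact Eh.
    - exfalso. assert (tau' = negb tau) by (destruct tau, tau'; auto; congruence). subst tau'.
      rewrite HG in Eh. apply (Rf_neq sig' y (G a)). rewrite <- Eh. reflexivity. }
  destruct (affZ f (Tri _ _ _ Hf) (Sur false f g sig Hf Hg)) as [ef [Sf Lf]].
  assert (Hf' : forall a, beta (Rf (negb true) a) = Rf (negb (negb sig)) (f a))
    by (intro; rewrite Bool.negb_involutive; apply Hf).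
  destruct (affZ g (Tri _ _ _ Hg) (Sur true g f (negb sig) Hg Hf')) as [eg [Sg Lg]].
  assert (SF : sgn (IZR ef)) by (destruct Sf as [-> | ->]; simpl; sgnt).
  assert (SG : sgn (IZR eg)) by (destruct Sg as [-> | ->]; simpl; sgnt).
  destruct sig.
  - exists true, (IZR eg), (IZR ef), (g 0%Z), (f 0%Z). split; auto. split; auto.
    match goal with |- forall h, P h -> @?Q h => apply (P_gen Q) end.
    + intros a x. rewrite Hf, Lf. destruct x as [x1 x2]. unfold Rf, nf, pm; simpl.
      rewrite plus_IZR, mult_IZR. apply pair_eq; ring.
    + intros b x. rewrite Hg, Lg. destruct x as [x1 x2]. unfold Rf, nf, pm; simpl.
      rewrite plus_IZR, mult_IZR. apply pair_eq; ring.
    + intros h1 h2 H1 H2 Q1 Q2 x. rewrite Bhom; auto. unfold compm. rewrite Q2, Q1. reflexivity.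
  - exists false, (IZR ef), (IZR eg), (f 0%Z), (g 0%Z). split; auto. split; auto.
    match goal with |- forall h, P h -> @?Q h => apply (P_gen Q) end.
    + intros a x. rewrite Hf, Lf. destruct x as [x1 x2]. unfold Rf, nf, pm; simpl.
      rewrite plus_IZR, mult_IZR. apply pair_eq; ring.
    + intros b x. rewrite Hg, Lg. destruct x as [x1 x2]. unfold Rf, nf, pm; simpl.
      rewrite plus_IZR, mult_IZR. apply pair_eq; ring.
    + intros h1 h2 H1 H2 Q1 Q2 x. rewrite Bhom; auto. unfold compm. rewrite Q2, Q1. reflexivity.
Qed.

End Pmm.

Section Main.
Variables (s : R) (iota iotainv : map2) (M : group2).
Hypothesis Hs : 0 < s.
Hypothesis Hiso : is_isometry iota.
Hypothesis Hl : forall x, iotainv (iota x) = x.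
Hypothesis Hr : forall y, iota (iotainv y) = y.
Hypothesis Haff : is_affine iota.
Hypothesis Haffi : is_affine iotainv.
Hypothesis HM : conj_group iota (pmm_square s) M.

Definition cj (g : map2) : map2 := fun x => iotainv (g (iota x)).
Definition uc (h : map2) : map2 := fun y => iota (h (iotainv y)).

Lemma cj_uc h : cj (uc h) = h.
Proof. apply functional_extensionality. intro x. unfold cj, uc. rewrite !Hl. reflexivity. Qed.
Lemma uc_cj g : uc (cj g) = g.
Proof. apply functional_extensionality. intro x. unfold cj, uc. rewrite !Hr. reflexivity. Qed.

Lemma M_iff g : M g <-> P s (cj g).
Proof.
  rewrite (HM g). split.
  - intros [h [Hh E]]. replace (cj g) with h; auto.
    apply functional_extensionality. intro x. unfold cj. rewrite E, Hl. reflexivity.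
  - intro H. exists (cj g). split; auto. intro x. unfold cj. rewrite Hr. reflexivity.
Qed.

Lemma M_uc h : M (uc h) <-> P s h.
Proof. rewrite M_iff, cj_uc. tauto. Qed.

Lemma uc_comp a b : uc (compm a b) = compm (uc a) (uc b).
Proof. apply functional_extensionality. intro x. unfold uc, compm. rewrite Hl. reflexivity. Qed.
Lemma cj_comp a b : cj (compm a b) = compm (cj a) (cj b).
Proof. apply functional_extensionality. intro x. unfold cj, compm. rewrite Hr. reflexivity. Qed.

Lemma M_id : M idm.
Proof. apply M_iff. replace (cj idm) with idm. apply P_id; auto.
  apply functional_extensionality. intro x. unfold cj, idm. rewrite Hl. reflexivity. Qed.

Lemma M_comp g h : M g -> M h -> M (compm g h).
Proof. rewrite !M_iff, cj_comp. apply P_comp. Qed.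

Lemma M_inv g : M g -> exists h, M h /\ (forall x, h (g x) = x) /\ (forall x, g (h x) = x).
Proof.
  intro Hg. apply M_iff in Hg. destruct (P_inv s (cj g) Hg) as [h [Hh [E1 E2]]].
  exists (uc h). split; [apply M_uc; auto|split].
  - intro x. unfold uc. specialize (E1 (iotainv x)). unfold cj in E1.
    rewrite Hr in E1. rewrite E1. apply Hr.
  - intro x. unfold uc. specialize (E2 (iotainv x)). unfold cj in E2.
    rewrite <- (Hr (g _)), E2. apply Hr.
Qed.

Lemma iso_inv a b : dist2 (iotainv a) (iotainv b) = dist2 a b.
Proof. destruct Hiso as [Hd _]. rewrite <- (Hd (iotainv a) (iotainv b)), !Hr. reflexivity. Qed.

Lemma uc_iso h : (forall x y, dist2 (h x) (h y) = dist2 x y) ->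
  forall x y, dist2 (uc h x) (uc h y) = dist2 x y.
Proof. intros H x y. unfold uc. destruct Hiso as [Hd _]. rewrite Hd, H. apply iso_inv. Qed.

Lemma aff_uc h : is_affine h -> is_affine (uc h).
Proof. intro H. exact (aff_comp iota (fun y => h (iotainv y)) Haff (aff_comp h iotainv H Haffi)). Qed.
Lemma aff_cj g : is_affine g -> is_affine (cj g).
Proof. intro H. exact (aff_comp iotainv (fun y => g (iota y)) Haffi (aff_comp g iota H Haff)). Qed.

Lemma aff_ext f g : (forall x, f x = g x) -> is_affine f -> is_affine g.
Proof. intros E H. replace g with f; auto. apply functional_extensionality; auto. Qed.

Lemma norm_uc h : normalizes (P s) h -> normalizes M (uc h).
Proof.
  intros [Nf Nr]. split.
  - intros g Hg. apply M_iff in Hg. destruct (Nf _ Hg) as [k [Hk E]].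
    exists (uc k). split; [apply M_uc; auto|]. intro x. unfold uc.
    rewrite <- (Hr x) at 1. fold (cj g (iotainv x)). unfold cj at 1.
    rewrite Hl. rewrite <- E. unfold cj. rewrite Hr. reflexivity.
  - intros k Hk. apply M_iff in Hk. destruct (Nr _ Hk) as [g [Hg E]].
    exists (uc g). split; [apply M_uc; auto|]. intro x. unfold uc.
    rewrite Hl, E. unfold cj. rewrite Hr. reflexivity.
Qed.

Lemma norm_cj phi : normalizes M phi -> normalizes (P s) (cj phi).
Proof.
  intros [Nf Nr]. split.
  - intros g Hg. apply M_uc in Hg. destruct (Nf _ Hg) as [k [Hk E]].
    exists (cj k). split; [apply M_iff; auto|]. intro x. unfold cj.
    specialize (E (iota x)). unfold uc in E. rewrite Hl in E.
    rewrite E, Hr. reflexivity.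
  - intros k Hk. apply M_uc in Hk. destruct (Nr _ Hk) as [g [Hg E]].
    exists (cj g). split; [apply M_iff; auto|]. intro x. unfold cj.
    rewrite Hr, E. unfold uc. rewrite Hl. reflexivity.
Qed.

Lemma P_aff h : P s h -> is_affine h.
Proof.
  intro H. apply P_pm in H. destruct H as [e1 [e2 [k1 [k2 [S1 [S2 ->]]]]]].
  apply (aff_ext (nf s false e1 e2 (2*k1) (2*k2))); [|apply nf_aff; auto].
  intros [x1 x2]. unfold nf, pm. cbn [fst snd]. rewrite !mult_IZR. simpl. apply pair_eq; ring.
Qed.

Lemma M_aff g : M g -> is_affine g.
Proof. intro H. apply M_iff in H. rewrite <- (uc_cj g). apply aff_uc, P_aff; auto. Qed.

Lemma Orb_eq (O1 O2 : Orb M) : proj1_sig O1 = proj1_sig O2 -> O1 = O2.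
Proof.
  destruct O1 as [S1 H1], O2 as [S2 H2]. simpl. intros ->. f_equal. apply proof_irrelevance.
Qed.

Lemma orb_M g y : M g -> orb M (g y) = orb M y.
Proof.
  intro Hg. apply Orb_eq. simpl. destruct (M_inv g Hg) as [gi [Hgi [E1 E2]]].
  apply functional_extensionality. intro z. apply propositional_extensionality.
  unfold orbit. split.
  - intros [h [Hh ->]]. exists (compm h g). split; [apply M_comp; auto|reflexivity].
  - intros [h [Hh ->]]. exists (compm h gi). split; [apply M_comp; auto|].
    unfold compm. rewrite E1. reflexivity.
Qed.

Lemma orb_P h z : P s h -> orb M (iota (h z)) = orb M (iota z).
Proof.
  intro Hh. replace (iota (h z)) with (uc h (iota z)).
  - apply orb_M. apply M_uc; auto.
  - unfold uc. rewrite Hl. reflexivity.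
Qed.

Lemma Orb_surj (O : Orb M) : exists x, O = orb M (iota x).
Proof.
  destruct O as [S [y Hy]]. exists (iotainv y). rewrite Hr. apply Orb_eq. simpl. exact Hy.
Qed.

Lemma Orb_ext (F G : Orb M -> Orb M) :
  (forall x, F (orb M (iota x)) = G (orb M (iota x))) -> F = G.
Proof.
  intro H. apply functional_extensionality. intro O. destruct (Orb_surj O) as [x ->]. auto.
Qed.

Definition rep (O : Orb M) : R2 :=
  proj1_sig (constructive_indefinite_description _ (proj2_sig O)).

Lemma rep_spec O : proj1_sig O = orbit M (rep O).
Proof. unfold rep. destruct (constructive_indefinite_description _ (proj2_sig O)). auto. Qed.

Definition ind (phi : map2) (O : Orb M) : Orb M := orb M (phi (rep O)).

Lemma ind_orb phi x : normalizes M phi -> ind phi (orb M x) = orb M (phi x).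
Proof.
  intro HN. unfold ind. pose proof (rep_spec (orb M x)) as E. simpl in E.
  set (y := rep (orb M x)) in *.
  assert (Hy : orbit M x y) by (rewrite E; exists idm; split; [apply M_id|reflexivity]).
  destruct Hy as [g [Hg ->]]. destruct (proj1 HN g Hg) as [h [Hh Eh]].
  rewrite Eh. apply orb_M; auto.
Qed.

Lemma ind_set phi O y : normalizes M phi ->
  proj1_sig (ind phi O) y <-> exists x, proj1_sig O x /\ y = phi x.
Proof.
  intro HN. destruct (Orb_surj O) as [x0 ->]. rewrite ind_orb; auto. simpl. unfold orbit.
  split.
  - intros [h [Hh ->]]. destruct (proj2 HN h Hh) as [g [Hg Eg]].
    exists (g (iota x0)). split; [exists g; auto|]. rewrite Eg. reflexivity.
  - intros [x [[g [Hg ->]] ->]]. destruct (proj1 HN g Hg) as [h [Hh Eh]].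
    exists h. split; auto.
Qed.

Lemma Aff_ind F : Aff M F <-> exists phi, in_NA M phi /\ F = ind phi.
Proof.
  split.
  - intros [phi [Hphi Hind]]. exists phi. split; auto.
    apply functional_extensionality. intro O. destruct (Orb_surj O) as [x ->].
    rewrite Hind, ind_orb; auto. apply Hphi.
  - intros [phi [Hphi ->]]. exists phi. split; auto. intro x. apply ind_orb, Hphi.
Qed.

Lemma Sym_ind phi : in_NA M phi -> (forall p q, dist2 (phi p) (phi q) = dist2 p q) ->
  Sym M (ind phi).
Proof.
  intros HA Hd. split; [apply Aff_ind; exists phi; auto|].
  destruct HA as [_ HN].
  intros O1 O2 r. unfold odist. split.
  - intros [Lb Ap]. split.
    + intros p q Hp Hq. apply ind_set in Hp; auto. apply ind_set in Hq; auto.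
      destruct Hp as [x [Hx ->]], Hq as [y [Hy ->]]. rewrite Hd. auto.
    + intros e He. destruct (Ap e He) as [p [q [Hp [Hq Hpq]]]].
      exists (phi p), (phi q). rewrite Hd. split; [|split]; auto;
      apply ind_set; auto; eexists; eauto.
  - intros [Lb Ap]. split.
    + intros p q Hp Hq. rewrite <- Hd. apply Lb; apply ind_set; auto; eexists; eauto.
    + intros e He. destruct (Ap e He) as [p [q [Hp [Hq Hpq]]]].
      apply ind_set in Hp; auto. apply ind_set in Hq; auto.
      destruct Hp as [x [Hx ->]], Hq as [y [Hy ->]]. rewrite Hd in Hpq.
      exists x, y. auto.
Qed.

Lemma classM phi : in_NA M phi -> exists sw b1 b2 h, P s h /\
  forall y, phi y = iota (h (can s sw b1 b2 (iotainv y))).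
Proof.
  intros [HA HN].
  destruct (classify s Hs (cj phi) (aff_cj _ HA) (norm_cj _ HN))
    as [sw [e1 [e2 [j1 [j2 [S1 [S2 E]]]]]]].
  destruct (nf_can s sw e1 e2 j1 j2 S1 S2) as [h [Hh Eh]].
  exists sw, (Z.odd j1), (Z.odd j2), h. split; auto.
  intro y. rewrite <- Eh, <- E. unfold cj. rewrite !Hr. reflexivity.
Qed.

Lemma can_NA sw b1 b2 : in_NA M (uc (can s sw b1 b2)) /\
  forall x y, dist2 (uc (can s sw b1 b2) x) (uc (can s sw b1 b2) y) = dist2 x y.
Proof.
  destruct (can_nf s sw b1 b2) as [e1 [e2 [j1 [j2 [S1 [S2 E]]]]]].
  replace (can s sw b1 b2) with (nf s sw e1 e2 j1 j2)
    by (apply functional_extensionality; intro; rewrite E; reflexivity).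
  split; [split|].
  - apply aff_uc, nf_aff; auto.
  - apply norm_uc, nf_norm; auto.
  - apply uc_iso, nf_iso; auto.
Qed.

Definition Fb (sw b1 b2 : bool) : Orb M -> Orb M := ind (uc (can s sw b1 b2)).

Lemma Fb_orb sw b1 b2 x : Fb sw b1 b2 (orb M (iota x)) = orb M (iota (can s sw b1 b2 x)).
Proof.
  unfold Fb. rewrite ind_orb; [|apply (can_NA sw b1 b2)]. unfold uc. rewrite Hl. reflexivity.
Qed.

Lemma Fb_Sym sw b1 b2 : Sym M (Fb sw b1 b2).
Proof. apply Sym_ind; apply can_NA. Qed.

Lemma Aff_Fb F : Aff M F -> exists sw b1 b2, F = Fb sw b1 b2.
Proof.
  intros [phi [HA Hind]]. destruct (classM phi HA) as [sw [b1 [b2 [h [Hh E]]]]].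
  exists sw, b1, b2. apply Orb_ext. intro x. rewrite Hind, Fb_orb, E, Hl. apply orb_P; auto.
Qed.

Lemma orb_sep u v : orb M (iota u) = orb M (iota v) -> exists h, P s h /\ u = h v.
Proof.
  intro E. apply (f_equal (@proj1_sig _ _)) in E. simpl in E.
  assert (H : orbit M (iota v) (iota u)) by (rewrite <- E; exists idm; split; [apply M_id|reflexivity]).
  destruct H as [g [Hg Eg]]. exists (cj g). split; [apply M_iff; auto|].
  unfold cj. rewrite <- Eg, Hl. reflexivity.
Qed.

Definition p0 : R2 := (s/4, s/8).

Lemma can_p0 sw b1 b2 sw' b1' b2' :
  orb M (iota (can s sw b1 b2 p0)) = orb M (iota (can s sw' b1' b2' p0)) ->
  sw = sw' /\ b1 = b1' /\ b2 = b2'.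
Proof.
  intro E. destruct (orb_sep _ _ E) as [h [Hh Eh]].
  apply (sep s h) in Eh; auto;
    try (destruct sw, b1, b2; unfold can, fl, p0; simpl; lra);
    try (destruct sw', b1', b2'; unfold can, fl, p0; simpl; lra).
  destruct sw, b1, b2, sw', b1', b2'; unfold can, fl, p0 in Eh; simpl in Eh;
    try (injection Eh; intros; lra); auto.
Qed.

Lemma Fb_inj sw b1 b2 sw' b1' b2' : Fb sw b1 b2 = Fb sw' b1' b2' ->
  sw = sw' /\ b1 = b1' /\ b2 = b2'.
Proof.
  intro E. apply can_p0. rewrite <- !Fb_orb, E. reflexivity.
Qed.

Lemma Fb_In sw b1 b2 x : Fb sw b1 b2 (orb M (iota x)) = orb M (iota (can s sw b1 b2 x)).
Proof. apply Fb_orb. Qed.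

Lemma Omega_exists F : Aff M F -> exists alpha, is_aut M alpha /\ Omega_rel M F alpha.
Proof.
  intros [phi [[HA [Nf Nr]] Hind]].
  destruct (aff_inv phi HA) as [phinv [_ [L R]]].
  set (alpha := fun g => fun y => phi (g (phinv y))).
  assert (Ag : forall g h, (forall x, phi (g x) = h (phi x)) -> alpha g = h).
  { intros g h E. apply functional_extensionality. intro y. unfold alpha.
    rewrite E, R. reflexivity. }
  exists alpha. split; [split; [|split; [|split]]|].
  - intros g Hg. destruct (Nf g Hg) as [h [Hh E]]. rewrite (Ag g h E). auto.
  - intros g h Hg Hh E. apply functional_extensionality. intro x.
    pose proof (pt_eq _ _ E (phi x)) as E'. unfold alpha in E'. rewrite L in E'.
    rewrite <- (L (g x)), E', L. reflexivity.
  - intros h Hh. destruct (Nr h Hh) as [g [Hg E]]. exists g. split; auto.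
  - intros g h Hg Hh. apply functional_extensionality. intro y.
    unfold alpha, compm. rewrite L. reflexivity.
  - exists phi. split; [split; [|split]; auto|split; auto].
    intros g Hg. apply functional_extensionality. intro x. unfold alpha, compm.
    rewrite L. reflexivity.
Qed.

Lemma Omega_wd F alpha beta : Omega_rel M F alpha -> Omega_rel M F beta ->
  out_eq M alpha beta.
Proof.
  intros [phi [Hphi [Iphi Rphi]]] [psi [Hpsi [Ipsi Rpsi]]].
  destruct (classM phi Hphi) as [sw [b1 [b2 [h1 [Hh1 E1]]]]].
  destruct (classM psi Hpsi) as [sw' [b1' [b2' [h2 [Hh2 E2]]]]].
  assert (B : sw = sw' /\ b1 = b1' /\ b2 = b2').
  { apply can_p0.
    assert (A : orb M (phi (iota p0)) = orb M (psi (iota p0))) by (rewrite <- Iphi, <- Ipsi; reflexivity).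
    rewrite E1, E2, !Hl in A. rewrite (orb_P h1), (orb_P h2) in A; auto. }
  destruct B as [<- [<- <-]].
  destruct (P_inv s h2 Hh2) as [h2i [Hh2i [L2 _]]].
  set (k := uc (compm h1 h2i)).
  assert (Mk : M k) by (apply M_uc; apply P_comp; auto).
  assert (Ek : forall y, phi y = k (psi y)).
  { intro y. unfold k, uc, compm. rewrite E1, E2, Hl, L2. reflexivity. }
  destruct (aff_inv psi (proj1 Hpsi)) as [psinv [_ [_ Rp]]].
  exists k. split; auto. intros g Hg. apply functional_extensionality. intro z.
  rewrite <- (Rp z). unfold compm. rewrite <- Ek.
  pose proof (pt_eq _ _ (Rphi g Hg) (psinv z)) as A. unfold compm in A. rewrite A.
  pose proof (pt_eq _ _ (Rpsi g Hg) (psinv z)) as B. unfold compm in B. rewrite B.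
  apply Ek.
Qed.

Lemma Omega_alpha_M alpha phi g : in_NA M phi -> (forall g, M g -> compm (alpha g) phi = compm phi g) ->
  M g -> M (alpha g).
Proof.
  intros [HA [Nf _]] R Hg. destruct (Nf g Hg) as [h [Hh E]].
  destruct (aff_inv phi HA) as [phinv [_ [_ Rp]]].
  replace (alpha g) with h; auto. apply functional_extensionality. intro y.
  rewrite <- (Rp y). rewrite <- E. pose proof (pt_eq _ _ (R g Hg) (phinv y)) as A.
  unfold compm in A. rewrite A. reflexivity.
Qed.

Lemma Omega_hom F1 F2 alpha1 alpha2 : Omega_rel M F1 alpha1 -> Omega_rel M F2 alpha2 ->
  Omega_rel M (compO F1 F2) (fun g => alpha1 (alpha2 g)).
Proof.
  intros [phi1 [H1 [I1 R1]]] [phi2 [H2 [I2 R2]]].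
  exists (compm phi1 phi2). split; [|split].
  - destruct H1 as [A1 [Nf1 Nr1]], H2 as [A2 [Nf2 Nr2]]. split; [exact (aff_comp _ _ A1 A2)|split].
    + intros g Hg. destruct (Nf2 g Hg) as [h [Hh E]]. destruct (Nf1 h Hh) as [h' [Hh' E']].
      exists h'. split; auto. intro x. unfold compm. rewrite E, E'. reflexivity.
    + intros h Hh. destruct (Nr1 h Hh) as [g [Hg E]]. destruct (Nr2 g Hg) as [g' [Hg' E']].
      exists g'. split; auto. intro x. unfold compm. rewrite E', E. reflexivity.
  - intro x. unfold compO, compm. rewrite I2, I1. reflexivity.
  - intros g Hg. apply functional_extensionality. intro x.
    assert (M2 : M (alpha2 g)) by (apply (Omega_alpha_M alpha2 phi2); auto).
    pose proof (pt_eq _ _ (R1 _ M2) (phi2 x)) as A. pose proof (pt_eq _ _ (R2 _ Hg) x) as B.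
    unfold compm in *. rewrite A, B. reflexivity.
Qed.

Lemma Omega_inj F1 F2 alpha1 alpha2 : Omega_rel M F1 alpha1 -> Omega_rel M F2 alpha2 ->
  out_eq M alpha1 alpha2 -> F1 = F2.
Proof.
  intros [phi1 [H1 [I1 R1]]] [phi2 [H2 [I2 R2]]] [k [Mk Ek]].
  destruct (aff_inv phi1 (proj1 H1)) as [ph1i [_ [L1 Rp1]]].
  set (c := fun x => ph1i (k (phi2 x))).
  assert (Cc : forall g, M g -> forall y, c (g y) = g (c y)).
  { intros g Hg y. unfold c.
    pose proof (pt_eq _ _ (R2 g Hg) y) as A. unfold compm in A. rewrite <- A.
    pose proof (pt_eq _ _ (Ek g Hg) (phi2 y)) as B. unfold compm in B. rewrite <- B.
    rewrite <- (Rp1 (k (phi2 y))) at 1.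
    pose proof (pt_eq _ _ (R1 g Hg) (ph1i (k (phi2 y)))) as C. unfold compm in C.
    rewrite C, L1. reflexivity. }
  assert (Ac : is_affine c).
  { unfold c. apply (aff_comp ph1i (fun x => k (phi2 x))).
    - destruct (aff_inv phi1 (proj1 H1)) as [q [Aq [Lq Rq]]].
      apply (aff_ext q); auto. intro y. rewrite <- (Rp1 y) at 1. rewrite Lq. reflexivity.
    - apply aff_comp; [apply M_aff; auto|apply H2]. }
  assert (C' : forall x, cj c x = x).
  { apply (central s Hs); [apply aff_cj; auto|].
    intros h Hh x. unfold cj. replace (iota (h x)) with (uc h (iota x)) by (unfold uc; rewrite Hl; reflexivity).
    rewrite Cc; [|apply M_uc; auto]. unfold uc. rewrite Hl. reflexivity. }
  assert (C : forall y, k (phi2 y) = phi1 y).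
  { intro y. specialize (C' (iotainv y)). unfold cj in C'. rewrite Hr in C'.
    apply (f_equal iota) in C'. rewrite !Hr in C'.
    unfold c in C'. rewrite <- (Rp1 (k (phi2 y))). rewrite C'. reflexivity. }
  apply functional_extensionality. intro O. destruct (Orb_surj O) as [x ->].
  rewrite I1, I2, <- C. apply orb_M; auto.
Qed.

Lemma Omega_surj alpha : is_aut M alpha ->
  exists F beta, Aff M F /\ Omega_rel M F beta /\ out_eq M alpha beta.
Proof.
  intros [Ain [Ainj [Asur Ahom]]].
  set (beta := fun h => cj (alpha (uc h))).
  assert (Baut : is_aut (P s) beta).
  { split; [|split; [|split]].
    - intros h Hh. apply M_iff. apply Ain. apply M_uc; auto.
    - intros g h Hg Hh E. unfold beta in E. apply (f_equal uc) in E. rewrite !uc_cj in E.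
      apply Ainj in E; try apply M_uc; auto. apply (f_equal cj) in E. rewrite !cj_uc in E. exact E.
    - intros h Hh. destruct (Asur (uc h)) as [g [Hg E]]; [apply M_uc; auto|].
      exists (cj g). split; [apply M_iff; auto|]. unfold beta. rewrite uc_cj, E, cj_uc. reflexivity.
    - intros g h Hg Hh. unfold beta. rewrite uc_comp, Ahom, cj_comp; auto; apply M_uc; auto. }
  destruct (aut_P s Hs beta Baut) as [sw [e1 [e2 [j1 [j2 [S1 S2]]]]]].
  destruct S2 as [S2 Q].
  set (Psi := uc (nf s sw e1 e2 j1 j2)).
  assert (HP : in_NA M Psi) by (split; [apply aff_uc, nf_aff|apply norm_uc, nf_norm]; auto).
  exists (ind Psi), alpha. split; [|split].
  - apply Aff_ind. exists Psi. auto.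
  - exists Psi. split; auto. split; [intro x; apply ind_orb, HP|].
    intros g Hg. apply functional_extensionality. intro y. unfold compm, Psi, uc.
    assert (Eg : alpha g = uc (beta (cj g))) by (unfold beta; rewrite uc_cj, uc_cj; reflexivity).
    rewrite Eg. unfold uc at 1. rewrite Hl, Q; [|apply M_iff; auto]. unfold cj. rewrite Hr. reflexivity.
  - exists idm. split; [apply M_id|]. intros; reflexivity.
Qed.

Ltac orbeq := apply Orb_ext; intros [x1 x2]; unfold compO; cbv beta; rewrite ?Fb_orb;
  f_equal; f_equal; unfold can, fl; simpl; apply pair_eq; ring.

Lemma main_sec :
  exists mref dref : Orb M -> Orb M,
    (forall x, mref (orb M (iota x)) = orb M (iota (s - fst x, snd x))) /\
    (forall x, dref (orb M (iota x)) = orb M (iota (snd x, fst x))) /\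
    compO mref mref = (fun O => O) /\
    compO dref dref = (fun O => O) /\
    compO mref (compO dref (compO mref dref))
      = compO dref (compO mref (compO dref mref)) /\
    (let L := ((fun O => O) :: mref :: dref :: compO mref dref :: compO dref mref
               :: compO mref (compO dref mref) :: compO dref (compO mref dref)
               :: compO mref (compO dref (compO mref dref)) :: nil)%list in
     List.NoDup L /\ (forall F, Sym M F <-> List.In F L)) /\
    (forall F, Sym M F <-> Aff M F) /\
    (forall F, Aff M F -> exists alpha, is_aut M alpha /\ Omega_rel M F alpha) /\
    (forall F alpha beta, Omega_rel M F alpha -> Omega_rel M F beta ->
       out_eq M alpha beta) /\
    (forall F1 F2 alpha1 alpha2, Omega_rel M F1 alpha1 -> Omega_rel M F2 alpha2 ->
       Omega_rel M (compO F1 F2) (fun g => alpha1 (alpha2 g))) /\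
    (forall F1 F2 alpha1 alpha2, Aff M F1 -> Aff M F2 ->
       Omega_rel M F1 alpha1 -> Omega_rel M F2 alpha2 ->
       out_eq M alpha1 alpha2 -> F1 = F2) /\
    (forall alpha, is_aut M alpha ->
       exists F beta, Aff M F /\ Omega_rel M F beta /\ out_eq M alpha beta).
Proof.
  exists (Fb false true false), (Fb true false false).
  split; [intro x; rewrite Fb_orb; reflexivity|].
  split; [intro x; rewrite Fb_orb; reflexivity|].
  split; [orbeq|]. split; [orbeq|]. split; [orbeq|].
  split.
  - cbv zeta.
    assert (E1 : compO (Fb false true false) (compO (Fb true false false)
                   (compO (Fb false true false) (Fb true false false))) = Fb false true true) by orbeq.
    assert (E2 : compO (Fb false true false) (compO (Fb true false false) (Fb false true false))
                 = Fb true true true) by orbeq.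
    assert (E3 : compO (Fb true false false) (compO (Fb false true false) (Fb true false false))
                 = Fb false false true) by orbeq.
    assert (E4 : compO (Fb false true false) (Fb true false false) = Fb true true false) by orbeq.
    assert (E5 : compO (Fb true false false) (Fb false true false) = Fb true false true) by orbeq.
    assert (E6 : (fun O : Orb M => O) = Fb false false false) by orbeq.
    rewrite E1, E2, E3, E4, E5, E6.
    set (G := fun b : bool * bool * bool => Fb (fst (fst b)) (snd (fst b)) (snd b)).
    set (bs := ((false,false,false) :: (false,true,false) :: (true,false,false) :: (true,true,false)
               :: (true,false,true) :: (true,true,true) :: (false,false,true) :: (false,true,true)
               :: nil)%list).
    match goal with |- NoDup ?L /\ _ => replace L with (map G bs) by reflexivity end.
    split.
    + apply NoDup_map_NoDup_ForallPairs.
      * intros [[a b] c] [[a' b'] c'] _ _ E. unfold G in E; simpl in E.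
        apply Fb_inj in E. destruct E as (-> & -> & ->). reflexivity.
      * unfold bs. repeat (apply NoDup_cons; [simpl; intuition discriminate|]). apply NoDup_nil.
    + intro F. split.
      * intro HS. destruct (Aff_Fb F (proj1 HS)) as [sw [b1 [b2 ->]]].
        apply in_map_iff. exists (sw, b1, b2). split; [reflexivity|].
        unfold bs. destruct sw, b1, b2; simpl; tauto.
      * intro HI. apply in_map_iff in HI. destruct HI as [[[a b] c] [<- _]]. apply Fb_Sym.
  - split; [intro F; split; [intros [H _]; exact H|
      intro H; destruct (Aff_Fb F H) as [sw [b1 [b2 ->]]]; apply Fb_Sym]|].
    split; [exact Omega_exists|].
    split; [exact Omega_wd|].
    split; [exact Omega_hom|].
    split; [intros F1 F2 a1 a2 _ _; apply Omega_inj|].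
    exact Omega_surj.
Qed.

End Main.

Theorem lemma12 (s : R) (iota : map2) (M : group2) :
  0 < s -> is_isometry iota -> conj_group iota (pmm_square s) M ->
  (* m-ref.: reflection of the square iota([0,s]^2) in the line iota(x1 = s/2);
     d-ref.: reflection in the diagonal iota(x1 = x2) *)
  exists mref dref : Orb M -> Orb M,
    (forall x, mref (orb M (iota x)) = orb M (iota (s - fst x, snd x))) /\
    (forall x, dref (orb M (iota x)) = orb M (iota (snd x, fst x))) /\
    (* Sym(M) = <m-ref., d-ref.> is dihedral of order 8 *)
    compO mref mref = (fun O => O) /\
    compO dref dref = (fun O => O) /\
    compO mref (compO dref (compO mref dref))
      = compO dref (compO mref (compO dref mref)) /\
    (let L := ((fun O => O) :: mref :: dref :: compO mref dref :: compO dref mref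
               :: compO mref (compO dref mref) :: compO dref (compO mref dref)
               :: compO mref (compO dref (compO mref dref)) :: nil)%list in
     List.NoDup L /\ (forall F, Sym M F <-> List.In F L)) /\
    (* Sym(M) = Aff(M) *)
    (forall F, Sym M F <-> Aff M F) /\
    (* Omega : Aff(M) -> Out(M) is a well-defined isomorphism *)
    (forall F, Aff M F -> exists alpha, is_aut M alpha /\ Omega_rel M F alpha) /\
    (forall F alpha beta, Omega_rel M F alpha -> Omega_rel M F beta ->
       out_eq M alpha beta) /\
    (forall F1 F2 alpha1 alpha2, Omega_rel M F1 alpha1 -> Omega_rel M F2 alpha2 ->
       Omega_rel M (compO F1 F2) (fun g => alpha1 (alpha2 g))) /\
    (forall F1 F2 alpha1 alpha2, Aff M F1 -> Aff M F2 ->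
       Omega_rel M F1 alpha1 -> Omega_rel M F2 alpha2 ->
       out_eq M alpha1 alpha2 -> F1 = F2) /\
    (forall alpha, is_aut M alpha ->
       exists F beta, Aff M F /\ Omega_rel M F beta /\ out_eq M alpha beta).
Proof.
  intros Hs Hiso HM.
  pose proof (iso_is_affine iota Hiso) as Haff.
  destruct (aff_inv iota Haff) as [iotainv [Haffi [Hl Hr]]].
  eapply main_sec; eauto.
Qed.
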